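(* Any protocol $P$ among $n$ players that achieves sender anonymity and is resistant against collusions of any $t<n-1$ players, where the only resources available are pairwise shared secret key bits, a reliable broadcast channel and public communication, uses at least $n(n-1)/2$ bits of pairwise shared key; i.e. its key-sharing graph must be the complete graph on $n$ nodes.
   Context: The key-sharing graph of the protocol is the undirected graph $G=(V,E)$ whose nodes are the players, with an edge between nodes $i$ and $j$ iff $i$ and $j$ share one bit of secret key; the number of pairwise shared key bits is $|E|$. Sender anonymity against collusions of $t$ players: for an adversary corrupting a set of $t$ players not including the sender $s$ and observing all communication $C$ and the randomness $G^t$ of the corrupted players, $\max_S\Pr[S=s\mid G^t,C]=\max_S\Pr[S=s]=1/(n-t)$, maximum over random variables $S$ depending only on $C$ and $G^t$. *)

(* Defs.v *)
(* Model of classical anonymous-broadcast protocols whose only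
   resources are pairwise shared secret key bits (one per edge of the
   key-sharing graph), private local randomness, and a reliable public
   broadcast channel.  Adversary: passive coalition T of players. *)
From HB Require Import structures.
From mathcomp Require Import all_boot all_order all_algebra.
Set Implicit Arguments.
Unset Strict Implicit.
Unset Printing Implicit Defensive.
Import Order.TTheory GRing.Theory Num.Theory.
Local Open Scope ring_scope.

Definition simple_graph (n : nat) (G : rel 'I_n) : Prop :=
  symmetric G /\ irreflexive G.

(* Edges of G as unordered pairs {i,j} with i < j: |E| = number of key bits. *)
Definition edges (n : nat) (G : rel 'I_n) : {set 'I_n * 'I_n} :=
  [set e : 'I_n * 'I_n | (e.1 < e.2)%N && G e.1 e.2].

(* A global key assignment: the bit shared by i < j is stored at k i j
   (other entries are never used). Keys are uniformly distributed. *)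
Definition Key (n : nat) := {ffun 'I_n -> {ffun 'I_n -> bool}}.

Definition key_view (n : nat) (G : rel 'I_n) (k : Key n) (i : 'I_n)
  : {ffun 'I_n -> bool} :=
  [ffun j => if G i j then (if (i < j)%N then k i j else k j i) else false].

(* Public transcript of an nR-round protocol: entry r is the vector of the
   messages broadcast by all players in round r (None = not yet happened). *)
Definition Hist (n : nat) (Msg : finType) (nR : nat) :=
  {ffun 'I_nR -> option {ffun 'I_n -> Msg}}.

(* A protocol: in round r, player i broadcasts a message that depends on its
   input (Some m if i is the sender with message bit m, None otherwise), its
   key bits, its private randomness and the public history so far. *)
Record protocol (n : nat) (Rnd Msg : finType) (nR : nat) := Protocol {
  next : 'I_n -> 'I_nR -> option bool -> {ffun 'I_n -> bool} -> Rnd ->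
         Hist n Msg nR -> Msg;
  decode : Hist n Msg nR -> bool }.

Definition hist_upd (n : nat) (Msg : finType) (nR : nat) (h : Hist n Msg nR)
  (r : 'I_nR) (x : {ffun 'I_n -> Msg}) : Hist n Msg nR :=
  [ffun r' => if r' == r then Some x else h r'].

Definition run (n : nat) (Rnd Msg : finType) (nR : nat) (G : rel 'I_n)
  (P : protocol n Rnd Msg nR) (s : 'I_n) (m : bool) (k : Key n)
  (rho : {ffun 'I_n -> Rnd}) : Hist n Msg nR :=
  foldl (fun h r => hist_upd h r
           [ffun i => next P i r (if i == s then Some m else None)
                                 (key_view G k i) (rho i) h])
        [ffun _ => None] (enum 'I_nR).

Definition is_dist (R : realFieldType) (A : finType) (p : A -> R) : Prop :=
  (forall x, 0 <= p x) /\ \sum_(x : A) p x = 1.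

Definition correct (R : realFieldType) (n : nat) (Rnd Msg : finType) (nR : nat)
  (G : rel 'I_n) (p : 'I_n -> Rnd -> R) (P : protocol n Rnd Msg nR) : Prop :=
  forall (s : 'I_n) (m : bool) (k : Key n) (rho : {ffun 'I_n -> Rnd}),
    (forall i, 0 < p i (rho i)) -> decode P (run G P s m k rho) = m.

(* What a coalition T sees: its keys and randomness (G^t), and the
   communication C. *)
Definition View (n : nat) (Rnd Msg : finType) (nR : nat) :=
  (Key n * {ffun 'I_n -> option Rnd} * Hist n Msg nR)%type.

Definition adv_view (n : nat) (Rnd Msg : finType) (nR : nat) (G : rel 'I_n)
  (P : protocol n Rnd Msg nR) (T : {set 'I_n}) (s : 'I_n) (m : bool)
  (k : Key n) (rho : {ffun 'I_n -> Rnd}) : View n Rnd Msg nR :=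
  ([ffun i => if i \in T then key_view G k i else [ffun _ => false]],
   [ffun i => if i \in T then Some (rho i) else None],
   run G P s m k rho).

Definition guess_prob (R : realFieldType) (n : nat) (Rnd Msg : finType)
  (nR : nat) (G : rel 'I_n) (p : 'I_n -> Rnd -> R) (P : protocol n Rnd Msg nR)
  (T : {set 'I_n}) (m : bool) (g : {ffun View n Rnd Msg nR -> 'I_n}) : R :=
  \sum_(s in ~: T) (#|~: T|%:R)^-1 *
    \sum_(k : Key n) \sum_(rho : {ffun 'I_n -> Rnd})
      (#|{: Key n}|%:R)^-1 * (\prod_(i : 'I_n) p i (rho i)) *
      (g (adv_view G P T s m k rho) == s)%:R.

(* Sender anonymity against every collusion of t < n-1 players: the best
   guess from (G^t, C) is no better than the blind guess 1/(n-t). *)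
Definition anonymous (R : realFieldType) (n : nat) (Rnd Msg : finType)
  (nR : nat) (G : rel 'I_n) (p : 'I_n -> Rnd -> R) (P : protocol n Rnd Msg nR)
  : Prop :=
  forall (T : {set 'I_n}), (#|T| < n.-1)%N -> forall m : bool,
    \big[Order.max/0]_(g : {ffun View n Rnd Msg nR -> 'I_n})
        guess_prob G p P T m g
      = (#|~: T|%:R)^-1.

(* Main.v *)
Require Import Defs.
From mathcomp Require Import all_boot all_order all_algebra.
From mathcomp Require Import lra.
Import Order.TTheory GRing.Theory Num.Theory.
Set Implicit Arguments.
Unset Printing Implicit Defensive.
Unset Strict Implicit.

Definition VecI (n : nat) (Rnd Msg : finType) (nR : nat) (P : protocol n Rnd Msg nR)
  (inp : 'I_n -> option bool) (kv : 'I_n -> {ffun 'I_n -> bool})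
  (rho : {ffun 'I_n -> Rnd}) (r : 'I_nR) (h : Hist n Msg nR) : {ffun 'I_n -> Msg} :=
  [ffun i => Defs.next P i r (inp i) (kv i) (rho i) h].

Definition stepI (n : nat) (Rnd Msg : finType) (nR : nat) (P : protocol n Rnd Msg nR)
  inp kv rho := fun (h : Hist n Msg nR) r => hist_upd h r (VecI P inp kv rho r h).

Definition runI (n : nat) (Rnd Msg : finType) (nR : nat) (P : protocol n Rnd Msg nR)
  inp kv rho : Hist n Msg nR :=
  foldl (stepI P inp kv rho) [ffun _ => None] (enum 'I_nR).

Definition pre (n : nat) (Msg : finType) (nR : nat) (t : Hist n Msg nR) (k : nat)
  : Hist n Msg nR := [ffun r' : 'I_nR => if (r' < k)%N then t r' else None].

Definition RecP (n : nat) (Rnd Msg : finType) (nR : nat) (P : protocol n Rnd Msg nR)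
  inp kv rho (t : Hist n Msg nR) :=
  forall r : 'I_nR, t r = Some (VecI P inp kv rho r (pre t r)).

Lemma size_enum_ord' nR : size (enum 'I_nR) = nR.
Proof. by rewrite size_enum_ord. Qed.

Lemma Rec_fold (n : nat) (Rnd Msg : finType) (nR : nat) (P : protocol n Rnd Msg nR)
  inp kv rho t : RecP P inp kv rho t -> forall k, (k <= nR)%N ->
  foldl (stepI P inp kv rho) [ffun _ => None] (take k (enum 'I_nR)) = pre t k.
Proof.
move=> Ht; elim=> [|k IH] Hk.
  by rewrite take0 /=; apply/ffunP=> r; rewrite !ffunE.
have Hk' : (k < nR)%N by [].
rewrite (take_nth (Ordinal Hk')); last by rewrite size_enum_ord.
rewrite foldl_rcons.
rewrite IH; last exact: ltnW.
have -> : nth (Ordinal Hk') (enum 'I_nR) k = Ordinal Hk'.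
  by apply: val_inj; rewrite /= nth_enum_ord.
apply/ffunP=> r; rewrite /stepI /hist_upd !ffunE.
case: eqP => [->|/eqP Hne].
  rewrite ltnSn Ht; congr (Some (VecI _ _ _ _ _ _)).
have E : (r == k :> nat) = false.
  by apply/negbTE; apply: contra Hne => /eqP He; apply/eqP/val_inj.
by rewrite [(r < k.+1)%N]ltnS [(r <= k)%N]leq_eqVlt E.
Qed.

Lemma Rec_unique (n : nat) (Rnd Msg : finType) (nR : nat) (P : protocol n Rnd Msg nR)
  inp kv rho t t' : RecP P inp kv rho t -> RecP P inp kv rho t' -> t = t'.
Proof.
move=> H1 H2.
have E : forall t0 : Hist n Msg nR, pre t0 nR = t0.
  by move=> t0; apply/ffunP=> r; rewrite ffunE ltn_ord.
rewrite -(E t) -(E t') -(Rec_fold H1 (leqnn nR)) -(Rec_fold H2 (leqnn nR)).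
reflexivity.
Qed.

Lemma Rec_run (n : nat) (Rnd Msg : finType) (nR : nat) (P : protocol n Rnd Msg nR)
  inp kv rho : RecP P inp kv rho (runI P inp kv rho).
Proof.
pose h k := foldl (stepI P inp kv rho) [ffun _ => None] (take k (enum 'I_nR)).
have key : forall k, (k <= nR)%N -> h k = pre (h k) k /\
   forall r : 'I_nR, (r < k)%N -> h k r = Some (VecI P inp kv rho r (pre (h k) r)).
  elim=> [|k IH] Hk.
    split; last by [].
    by rewrite /h take0 /=; apply/ffunP=> r; rewrite !ffunE.
  have Hk' : (k < nR)%N by [].
  have [IH1 IH2] := IH (ltnW Hk').
  have Eh : h k.+1 = hist_upd (h k) (Ordinal Hk') (VecI P inp kv rho (Ordinal Hk') (h k)).
    rewrite /h (take_nth (Ordinal Hk')); last by rewrite size_enum_ord.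
    rewrite foldl_rcons.
    have -> : nth (Ordinal Hk') (enum 'I_nR) k = Ordinal Hk'.
      by apply: val_inj; rewrite /= nth_enum_ord.
    reflexivity.
  have Ehr : forall r : 'I_nR, h k.+1 r =
     if (r == k :> nat) then Some (VecI P inp kv rho (Ordinal Hk') (h k)) else h k r.
    move=> r; rewrite Eh /hist_upd ffunE; congr (if _ then _ else _).
  have Hpre : forall r : 'I_nR, (r <= k)%N -> pre (h k.+1) r = pre (h k) r.
    move=> r Hr; apply/ffunP=> r'; rewrite !ffunE Ehr.
    case: ifP => // Hlt; case: eqP => // E; move: Hlt; rewrite E.
    by rewrite ltnNge Hr.
  split.
    apply/ffunP=> r; rewrite ffunE Ehr.
    case: eqP => [E|E]; first by rewrite E ltnSn.
    rewrite ltnS leq_eqVlt; case: (ltnP r k) => Hrk.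
      by rewrite orbT.
    rewrite orbF; have -> : (r == k :> nat) = false by apply/eqP.
    by rewrite IH1 ffunE ltnNge Hrk.
  move=> r Hr; rewrite Ehr.
  case: eqP => [E|E].
    rewrite Hpre ?E //; congr (Some _).
    have -> : r = Ordinal Hk' by apply/val_inj.
    by rewrite -IH1.
  rewrite (Hpre r); last by rewrite -ltnS.
  by apply: IH2; rewrite ltn_neqAle -ltnS Hr andbT; apply/eqP.
have [H1 H2] := key nR (leqnn nR).
have Eh : h nR = runI P inp kv rho.
  by rewrite /h take_oversize ?size_enum_ord.

by rewrite -Eh => r; apply: H2.
Qed.

Definition consb (n : nat) (Rnd Msg : finType) (nR : nat) (P : protocol n Rnd Msg nR)
  (x : 'I_n) (a : option bool) (b : {ffun 'I_n -> bool}) (c : Rnd)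
  (t : Hist n Msg nR) : bool :=
  [forall r : 'I_nR, if t r is Some y then y x == Defs.next P x r a b c (pre t r)
                      else false].

Lemma runI_cons (n : nat) (Rnd Msg : finType) (nR : nat) (P : protocol n Rnd Msg nR)
  inp kv rho t (x0 : 'I_n) :
  (runI P inp kv rho == t) = [forall x, consb P x (inp x) (kv x) (rho x) t].
Proof.
apply/eqP/forallP => [<- x|H].
  apply/forallP=> r; rewrite (Rec_run P inp kv rho r) ffunE.
  by [].
apply: Rec_unique (Rec_run P inp kv rho) _ => r.
case Etr: (t r) => [y|].
  congr Some; apply/ffunP=> x; rewrite ffunE.
  by have /forallP/(_ r) := H x; rewrite Etr => /eqP.
by have /forallP/(_ r) := H x0; rewrite Etr.
Qed.
Lemma card_lt_pairs n :
  #|[set e : 'I_n * 'I_n | (e.1 < e.2)%N]| = 'C(n, 2).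
Proof.
rewrite -sum1_card.
have -> : (\sum_(e in [set e : 'I_n * 'I_n | (e.1 < e.2)%N]) 1 =
           \sum_(e : 'I_n * 'I_n | (e.1 < e.2)%N) 1)%N.
  by apply: eq_bigl => e; rewrite inE.
rewrite -(pair_big_dep xpredT (fun a b : 'I_n => (a < b)%N) (fun _ _ => 1%N)) /=.
under eq_bigr => a _ do rewrite big_mkcond /=.
rewrite exchange_big /= -bin2_sum big_mkord.
apply: eq_bigr => b _.
rewrite -big_mkcond /=.
rewrite -(@big_ord_widen_cond _ 0%N addn b n xpredT (fun _ => 1%N) (ltnW (ltn_ord b))) /=.
by rewrite sum1_card card_ord.
Qed.

Local Open Scope ring_scope.

Lemma natr_and (R : pzSemiRingType) (a b : bool) :
  ((a && b : bool) : nat)%:R = (a : nat)%:R * (b : nat)%:R :> R.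
Proof. by case: a; case: b; rewrite ?mul1r ?mul0r. Qed.

Lemma natr_forall (R : comPzSemiRingType) (I : finType) (Q : pred I) :
  (([forall x, Q x] : bool) : nat)%:R = \prod_x ((Q x : bool) : nat)%:R :> R.
Proof.
have [H|] := boolP [forall x, Q x].
  by rewrite big1 // => x _; have /forallP := H; move=> /(_ x) ->.
move=> H; have /forallPn [x Hx] := H.
by rewrite (bigD1 x) //= (negbTE Hx) mul0r.
Qed.

Lemma sum_prod_ffun (R : comPzSemiRingType) (I J : finType) (F : I -> J -> R) :
  \sum_(f : {ffun I -> J}) \prod_i F i (f i) = \prod_i \sum_j F i j.
Proof. by rewrite bigA_distr_bigA. Qed.

Section Prob.
Variables (R : realFieldType) (n : nat) (G : rel 'I_n) (Rnd Msg : finType)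
  (nR : nat) (p : 'I_n -> Rnd -> R) (P : protocol n Rnd Msg nR) (T : {set 'I_n}).

Definition kT (k : Key n) : {ffun 'I_n -> {ffun 'I_n -> bool}} :=
  [ffun x => if x \in T then key_view G k x else [ffun _ => false]].
Definition rT (rho : {ffun 'I_n -> Rnd}) : {ffun 'I_n -> option Rnd} :=
  [ffun x => if x \in T then Some (rho x) else None].
Definition viewI inp k rho : View n Rnd Msg nR :=
  (kT k, rT rho, runI P inp (key_view G k) rho).
Definition wt (k : Key n) (rho : {ffun 'I_n -> Rnd}) : R :=
  (#|{: Key n}|%:R)^-1 * \prod_x p x (rho x).
Definition W inp (v : View n Rnd Msg nR) : R :=
  \sum_(k : Key n) \sum_(rho : {ffun 'I_n -> Rnd})
     wt k rho * ((viewI inp k rho == v) : nat)%:R.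

Lemma adv_viewE s m k rho : adv_view G P T s m k rho =
  viewI (fun x => if x == s then Some m else None) k rho.
Proof. reflexivity. Qed.

Lemma Wpart inp (F : View n Rnd Msg nR -> R) :
  \sum_(k : Key n) \sum_(rho : {ffun 'I_n -> Rnd}) wt k rho * F (viewI inp k rho)
  = \sum_v F v * W inp v.
Proof.
symmetry.
transitivity (\sum_(v : View n Rnd Msg nR) \sum_(k : Key n) \sum_(rho : {ffun 'I_n -> Rnd})
   F v * (wt k rho * ((viewI inp k rho == v) : nat)%:R)).
  apply: eq_bigr => v _; rewrite /W big_distrr; apply: eq_bigr => k _.
  by rewrite big_distrr.
rewrite exchange_big; apply: eq_bigr => k _; rewrite exchange_big.
apply: eq_bigr => rho _.
rewrite (bigD1 (viewI inp k rho)) //= eqxx mulr1 big1 ?addr0; first by rewrite mulrC.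
by move=> v Hv; rewrite eq_sym (negbTE Hv) !mulr0.
Qed.

Hypothesis Hp : forall i, is_dist (p i).

Lemma card_Key_gt0 : (0 < #|{: Key n}|)%N.
Proof. by apply/card_gt0P; exists [ffun _ => [ffun _ => false]]. Qed.

Lemma wt_ge0 k rho : 0 <= wt k rho.
Proof.
rewrite /wt mulr_ge0 ?invr_ge0 ?ler0n //.
by apply: prodr_ge0 => x _; case: (Hp x) => H _; apply: H.
Qed.

Lemma wt_total : \sum_(k : Key n) \sum_(rho : {ffun 'I_n -> Rnd}) wt k rho = 1.
Proof.
have E1 : \sum_(rho : {ffun 'I_n -> Rnd}) \prod_x p x (rho x) = 1.
  rewrite sum_prod_ffun big1 // => x _; by case: (Hp x).
have E2 : forall k : Key n, \sum_(rho : {ffun 'I_n -> Rnd}) wt k rho = (#|{: Key n}|%:R)^-1.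
  by move=> k; rewrite /wt -big_distrr /= E1 mulr1.
under eq_bigr => k _ do rewrite E2.
rewrite sumr_const; set c := (#|{: Key n}|%:R : R); rewrite -mulr_natr mulVf //; rewrite /c.
rewrite pnatr_eq0 -lt0n; exact: card_Key_gt0.
Qed.

Lemma W_ge0 inp v : 0 <= W inp v.
Proof.
apply: sumr_ge0 => k _; apply: sumr_ge0 => rho _.
by rewrite mulr_ge0 ?ler0n ?wt_ge0.
Qed.

Lemma W_sum inp : \sum_v W inp v = 1.
Proof.
rewrite -wt_total.
transitivity (\sum_v 1 * W inp v); first by apply: eq_bigr => v _; rewrite mul1r.
rewrite -(Wpart inp (fun _ => 1)).
by apply: eq_bigr => k _; apply: eq_bigr => rho _; rewrite mulr1.
Qed.

Definition KV (K0 : {ffun 'I_n -> {ffun 'I_n -> bool}}) (x : 'I_n) : {ffun 'I_n -> bool} :=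
  if x \in T then K0 x else [ffun y => K0 y x].

Definition Dfac inp x (v : View n Rnd Msg nR) : R :=
  \sum_(r : Rnd) p x r * (((v.1.2 x == if x \in T then Some r else None) &&
       consb P x (inp x) (KV v.1.1 x) r v.2) : nat)%:R.

Definition Cfac (v : View n Rnd Msg nR) : R :=
  (#|{: Key n}|%:R)^-1 * \sum_(k : Key n) ((kT k == v.1.1) : nat)%:R.

Lemma forall_andb (I : finType) (A B : pred I) :
  [forall x, A x] && [forall x, B x] = [forall x, A x && B x].
Proof.
apply/andP/forallP => [[/forallP HA /forallP HB] x|H].
  by rewrite HA HB.
by split; apply/forallP => x; have /andP[] := H x.
Qed.

Lemma W_factor (x0 : 'I_n) (HKV : forall k x, key_view G k x = KV (kT k) x) inp v :
  W inp v = Cfac v * \prod_x Dfac inp x v.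
Proof.
rewrite /W /Cfac /Dfac -sum_prod_ffun -mulrA mulr_suml big_distrr /=.
apply: eq_bigr => k _.
case: v => [[v11 v12] v2] /=.
have [E|E] := eqVneq (kT k) v11.
  rewrite mul1r big_distrr /=; apply: eq_bigr => rho _.
  rewrite /wt -mulrA; congr (_ * _).
  rewrite /viewI !xpair_eqE E eqxx /= (runI_cons _ _ _ _ _ x0).
  have -> : (rT rho == v12) = [forall x, v12 x == if x \in T then Some (rho x) else None].
    apply/eqP/forallP => [<- x|H]; first by rewrite ffunE.
    by apply/ffunP => x; rewrite ffunE; apply/esym/eqP/H.
  rewrite forall_andb natr_forall -big_split /=; apply: eq_bigr => x _.
  by rewrite HKV E.
rewrite mul0r mulr0; apply: big1 => rho _.
by rewrite /viewI !xpair_eqE (negbTE E) mulr0.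
Qed.

Lemma amgm (q a b : R) : 0 <= q -> 0 <= a -> 0 <= b -> q*q = a*b -> 2*q <= a+b.
Proof.
move=> hq ha hb E.
rewrite leNgt; apply/negP => H.
have h1 : 0 <= (a-b)*(a-b) by rewrite -expr2 sqr_ge0.
have h2 : (a+b)*(a+b) < (2*q)*(2*q).
  apply: ltr_pM => //; lra.
nra.
Qed.

Lemma le_sum_eq (I : finType) (f g : I -> R) :
  (forall v, f v <= g v) -> \sum_v g v <= \sum_v f v -> forall v, f v = g v.
Proof.
move=> Hfg Hs v.
have H0 : \sum_v (g v - f v) = 0.
  apply/eqP; rewrite eq_le; apply/andP; split.
    by rewrite sumrB subr_le0.
  by apply: sumr_ge0 => w _; rewrite subr_ge0.
have Hge : forall w, predT w -> 0 <= g w - f w by move=> w _; rewrite subr_ge0.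
have := @psumr_eq0P _ _ predT (fun w => g w - f w) Hge H0 v isT.
by move=> /eqP; rewrite subr_eq0 => /eqP ->.
Qed.

Variables (i j : 'I_n).
Hypothesis Hij : i != j.
Hypothesis HT : T = ~: [set i; j].

Definition ins (s : 'I_n) (m : bool) := fun x : 'I_n => if x == s then Some m else None.
Definition SS (m : bool) := fun x : 'I_n => if (x == i) || (x == j) then Some m else None.
Definition NN := fun _ : 'I_n => @None bool.

Lemma Dfac_ext inp1 inp2 x v : inp1 x = inp2 x -> Dfac inp1 x v = Dfac inp2 x v.
Proof. by move=> E; rewrite /Dfac E. Qed.

Lemma rect (HKV : forall k x, key_view G k x = KV (kT k) x) m v :
  W (ins i m) v * W (ins j m) v = W (SS m) v * W NN v.
Proof.
rewrite !(W_factor i HKV) mulrACA [RHS]mulrACA -!big_split /=.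
congr (_ * _); apply: eq_bigr => x _.
have [[E1 E2]|[E1 E2]] : (ins i m x = SS m x /\ ins j m x = NN x) \/
                         (ins i m x = NN x /\ ins j m x = SS m x).
  rewrite /ins /SS /NN.
  case: (eqVneq x i) => [->|Hxi].
    by left; rewrite ?eqxx ?(negbTE Hij).
  case: (eqVneq x j) => [Exj|Hxj]; first by right; rewrite ?orbT.
  by left.
  by rewrite (Dfac_ext _ E1) (Dfac_ext _ E2).
by rewrite (Dfac_ext _ E1) (Dfac_ext _ E2) mulrC.
Qed.

Lemma correct_sum (Hc : correct G p P) m :
  \sum_v W (ins i m) v * ((Defs.decode P v.2 != m) : nat)%:R = 0.
Proof.
under eq_bigr => v _ do rewrite mulrC.
rewrite -Wpart; apply: big1 => k _; apply: big1 => rho _.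
have [H|H] := boolP [forall x, 0 < p x (rho x)].
  have -> : Defs.decode P (viewI (ins i m) k rho).2 = m.
    exact: (Hc i m k rho (fun x => (forallP H) x)).
  by rewrite eqxx mulr0.
have /forallPn [x Hx] := H.
have Ex : p x (rho x) = 0.
  apply/eqP; rewrite eq_le; case: (Hp x) => /(_ (rho x)) -> _.
  by rewrite andbT leNgt.
by rewrite /wt (bigD1 x) //= Ex mul0r mulr0 mul0r.
Qed.

Lemma anon_eq (Ha : anonymous G p P) m v : W (ins i m) v = W (ins j m) v.
Proof.
have HTc : ~: T = [set i; j] by rewrite HT setCK.
have Hc2 : #|~: T| = 2%N by rewrite HTc cards2 Hij.
have HTsz : (#|T| < n.-1)%N.
  have := cardsC T; rewrite Hc2 card_ord => En.
  move: En; set a := #|T| => En.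
  by rewrite -En addn2 /=.
have Hmax := Ha T HTsz m.
pose Wi := W (ins i m); pose Wj := W (ins j m).
pose gs : {ffun View n Rnd Msg nR -> 'I_n} := [ffun v => if Wj v < Wi v then i else j].
have Hle := le_bigmax (0:R) (fun g => guess_prob G p P T m g) gs.
rewrite /= Hmax in Hle.
have Egp : forall g, guess_prob G p P T m g = \sum_(s in ~: T) (#|~: T|%:R)^-1 *
     \sum_v ((g v == s) : nat)%:R * W (ins s m) v.
  move=> g; apply: eq_bigr => s _; congr (_ * _).
  by rewrite -(Wpart (ins s m) (fun v => ((g v == s) : nat)%:R)).
pose Mx v := if Wj v < Wi v then Wi v else Wj v.
have Egs : guess_prob G p P T m gs = (#|~: T|%:R)^-1 * \sum_v Mx v.
  rewrite Egp HTc big_setU1 /=; last by rewrite in_set1.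
  rewrite big_set1 -mulrDr -big_split /=; congr (_ * _).
  apply: eq_bigr => w _; rewrite /Mx !ffunE.
  case: ifP => _; first by rewrite eqxx (negbTE Hij) mul1r mul0r addr0.
  by rewrite eqxx eq_sym (negbTE Hij) mul1r mul0r add0r.
rewrite Egs in Hle.
have Hc0 : 0 < (#|~: T|%:R : R)^-1 by rewrite invr_gt0 Hc2 ltr0n.
have HM : \sum_v Mx v <= 1.
  by rewrite -(ler_pM2l Hc0) mulr1.
have H1 : forall w, Wi w <= Mx w.
  by move=> w; rewrite /Mx; case: ifP => // /negbT; rewrite -leNgt.
have H2 : forall w, Wj w <= Mx w.
  by move=> w; rewrite /Mx; case: ifP => // /ltW.
have HMi : \sum_v Mx v <= \sum_v Wi v by rewrite /Wi W_sum.
have HMj : \sum_v Mx v <= \sum_v Wj v by rewrite /Wj W_sum.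
have E1 := le_sum_eq H1 HMi; have E2 := le_sum_eq H2 HMj.
transitivity (Mx v); [exact: E1 | symmetry; exact: E2].
Qed.

Lemma contra_main (HKV : forall k x, key_view G k x = KV (kT k) x)
  (Hc : correct G p P) (Ha : anonymous G p P) : False.
Proof.
have key : forall m, 1 <= \sum_v W NN v * ((Defs.decode P v.2 == m) : nat)%:R.
  move=> m.
  pose A (v : View n Rnd Msg nR) := ((Defs.decode P v.2 == m) : nat)%:R : R.
  have HA0 : forall v, 0 <= A v by move=> v; rewrite ler0n.
  have HA1 : forall v, A v <= 1 by move=> v; rewrite /A; case: (_ == _).
  have S1 : \sum_v W (ins i m) v * A v = 1.
    transitivity (\sum_v W (ins i m) v -
       \sum_v W (ins i m) v * ((Defs.decode P v.2 != m) : nat)%:R); last first.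
      by rewrite correct_sum // subr0 W_sum.
    rewrite -sumrB; apply: eq_bigr => v _; rewrite /A.
    by case: (_ == m); rewrite /= ?mulr1 ?mulr0 ?subr0 ?subrr.
  have step : forall v, 2 * (W (ins i m) v * A v) <= W (SS m) v * A v + W NN v * A v.
    move=> v; rewrite -mulrDl mulrA; apply: ler_wpM2r => //.
    apply: amgm; rewrite ?W_ge0 //.
    by rewrite {2}(anon_eq Ha m v) rect.
  have S2 : \sum_v W (SS m) v * A v <= 1.
    rewrite -(W_sum (SS m)); apply: ler_sum => v _.
    by apply: ler_piMr; rewrite ?W_ge0.
  have S3 : \sum_v 2 * (W (ins i m) v * A v) <= \sum_v (W (SS m) v * A v + W NN v * A v).
    by apply: ler_sum => v _; apply: step.
  rewrite -mulr_sumr S1 big_split /= in S3.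
  rewrite /A in S2 S3; lra.
have Ht := key true; have Hf := key false.
have Hs : \sum_v W NN v * ((Defs.decode P v.2 == true) : nat)%:R +
          \sum_v W NN v * ((Defs.decode P v.2 == false) : nat)%:R = 1.
  rewrite -big_split -[RHS](W_sum NN) /=; apply: eq_bigr => v _.
  by case: (Defs.decode P v.2); rewrite /= ?mulr1 ?mulr0 ?addr0 ?add0r.
lra.
Qed.

End Prob.

Lemma HKV_ok n (G : rel 'I_n) (T : {set 'I_n}) (i j : 'I_n)
  (HG : simple_graph G) (nG : ~~ G i j) (HT : T = ~: [set i; j]) :
  forall k x, key_view G k x = KV T (kT G T k) x.
Proof.
case: HG => Hsym Hirr.
move=> k x; rewrite /KV.
have [Hx|Hx] := boolP (x \in T); first by rewrite /kT ffunE Hx.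
apply/ffunP => y; rewrite !ffunE.
have [Hy|Hy] := boolP (y \in T).
  rewrite /key_view ffunE (Hsym y x).
  case: (G x y) => //.
  case: (ltngtP x y) => Hxy //.
  by have -> : x = y by apply: val_inj.
rewrite ffunE.
move: Hx Hy; rewrite HT !inE !negbK => Hx Hy.
case: (eqVneq x y) => [<-|Hxy]; first by rewrite Hirr.
have -> : G x y = false.
  case/orP: Hx => /eqP Ex; case/orP: Hy => /eqP Ey; subst x y;
    rewrite ?Hirr ?(negbTE nG) //.
  by rewrite Hsym (negbTE nG).
by [].
Qed.



Theorem mainTheorem5 (R : realFieldType) (n : nat) (G : rel 'I_n)
  (Rnd Msg : finType) (nR : nat) (p : 'I_n -> Rnd -> R)
  (P : protocol n Rnd Msg nR) :
  simple_graph G ->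
  (forall i, is_dist (p i)) ->
  correct G p P ->
  anonymous G p P ->
  (forall i j : 'I_n, i != j -> G i j) /\
  ((n * n.-1)./2 <= #|edges G|)%N.
Proof.
move=> HG Hp Hc Ha.
have Hcomp : forall i j : 'I_n, i != j -> G i j.
  move=> i j Hij; apply/negPn/negP => nG.
  exact: (@contra_main R n G Rnd Msg nR p P (~: [set i; j]) Hp i j Hij (erefl _)
           (HKV_ok HG nG (erefl _)) Hc Ha).
split => //.
have -> : edges G = [set e : 'I_n * 'I_n | (e.1 < e.2)%N].
  apply/setP => e; rewrite !inE; case Hlt: (e.1 < e.2)%N => //=.
  apply: Hcomp; apply/eqP => E; by rewrite E ltnn in Hlt.
by rewrite card_lt_pairs bin2.
Qed.
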